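(* Let $V$ be a real vector space and $C$ a cone in $V$. Suppose $X$ is a decomposably $C$-antichain-convex subset of $V$. (1) If $X$ is $C$-upward, then $X$ is convex. (2) If $X$ is $C$-downward, then $X$ is convex.
   Context: A cone in $V$ is a subset $C$ with $\lambda C\subseteq C$ for all $\lambda>0$ (possibly empty, need not contain $0$). $S\subseteq V$ is $C$-antichain-convex iff for all $x,y\in S$ and $\lambda\in[0,1]$ with $y-x\notin C\cup(-C)$ one has $\lambda x+(1-\lambda)y\in S$. $S$ is decomposably $C$-antichain-convex iff $S=S_1+\dots+S_n$ (Minkowski sum) for finitely many $C$-antichain-convex $S_i\subseteq V$. $S$ is $C$-upward iff $S+C\subseteq S$ (i.e., $x\in S$, $y-x\in C$ imply $y\in S$); $S$ is $C$-downward iff $S-C\subseteq S$. *)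

(* Defs.v *)
From mathcomp Require Import all_boot all_order all_algebra.
From mathcomp Require Import reals.
Set Implicit Arguments. Unset Strict Implicit. Unset Printing Implicit Defensive.
Import Order.TTheory GRing.Theory Num.Theory.
Local Open Scope ring_scope.

Section Defs.
Variables (R : realType) (V : lmodType R).

(* a cone: closed under multiplication by positive scalars (may be empty, need not contain 0) *)
Definition is_cone (C : V -> Prop) : Prop :=
  forall (l : R) (x : V), 0 < l -> C x -> C (l *: x).

Definition antichain_convex (C S : V -> Prop) : Prop :=
  forall (x y : V) (l : R), S x -> S y -> 0 <= l <= 1 ->
    ~ (C (y - x) \/ C (- (y - x))) -> S (l *: x + (1 - l) *: y).

Definition minkowski_sum (n : nat) (Ss : 'I_n -> V -> Prop) : V -> Prop :=
  fun x => exists f : 'I_n -> V, (forall i, Ss i (f i)) /\ x = \sum_(i < n) f i.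

Definition decomp_antichain_convex (C S : V -> Prop) : Prop :=
  exists (n : nat) (Ss : 'I_n -> V -> Prop),
    (forall i, antichain_convex C (Ss i)) /\
    (forall x, S x <-> minkowski_sum Ss x).

Definition upward (C S : V -> Prop) : Prop :=
  forall x y : V, S x -> C (y - x) -> S y.

Definition downward (C S : V -> Prop) : Prop :=
  forall x y : V, S x -> C (x - y) -> S y.

Definition convex_set (S : V -> Prop) : Prop :=
  forall (x y : V) (l : R), S x -> S y -> 0 <= l <= 1 -> S (l *: x + (1 - l) *: y).

End Defs.

(* Main.v *)
Require Import Defs.
From mathcomp Require Import all_boot all_order all_algebra.
From mathcomp Require Import reals.
From Stdlib Require Import IndefiniteDescription Classical.
Import Order.TTheory GRing.Theory Num.Theory.
Local Open Scope ring_scope.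

Section Aux.
Variables (R : realType) (V : lmodType R).

Lemma idA (l : R) (a b : V) : l *: a + (1 - l) *: b - a = (1 - l) *: (b - a).
Proof.
rewrite scalerBr [X in _ = _ - X]scalerBl scale1r opprB.
by rewrite addrAC addrC.
Qed.

Lemma idB (l : R) (a b : V) : l *: a + (1 - l) *: b - b = l *: (a - b).
Proof.
have h := idA (1 - l) b a.
have e : 1 - (1 - l) = l by rewrite opprB addrC subrK.
by rewrite e in h; rewrite [l *: a + _]addrC.
Qed.

Lemma core (C X : V -> Prop) (n : nat) (Ss : 'I_n -> V -> Prop)
  (HS : forall i, antichain_convex C (Ss i))
  (HX : forall x, X x <-> minkowski_sum Ss x)
  (D : V -> Prop) (hD0 : D 0) (hDX : forall x d, X x -> D d -> X (x + d))
  (hcomp : forall (a b : V) (l : R), 0 < l < 1 -> C (b - a) \/ C (- (b - a)) ->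
       exists u, (u = a \/ u = b) /\ D (l *: a + (1 - l) *: b - u)) :
  forall x y l, X x -> X y -> 0 < l < 1 -> X (l *: x + (1 - l) *: y).
Proof.
move=> x y l /HX [fx [Hfx ->]] /HX [fy [Hfy ->]] hl.
have hl' : 0 <= l <= 1 by case/andP: hl => h1 h2; rewrite ltW // ltW.
have ex : forall i, exists u, Ss i u /\
   D (l *: fx i + (1 - l) *: fy i - u).
  move=> i.
  case: (classic (C (fy i - fx i) \/ C (- (fy i - fx i)))) => hc.
    have [u [hu hD]] := hcomp _ _ _ hl hc.
    exists u; split=> //; by case: hu => ->.
  exists (l *: fx i + (1 - l) *: fy i); split; last by rewrite subrr.
  exact: HS.
pose g i := proj1_sig (constructive_indefinite_description _ (ex i)).
have hg : forall i, Ss i (g i) /\ D (l *: fx i + (1 - l) *: fy i - g i).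
  move=> i; exact: (proj2_sig (constructive_indefinite_description _ (ex i))).
have -> : l *: \sum_(i < n) fx i + (1 - l) *: \sum_(i < n) fy i =
   \sum_(i < n) g i + \sum_(i < n) (l *: fx i + (1 - l) *: fy i - g i).
  rewrite -big_split /= scaler_sumr scaler_sumr -big_split /=.
  by apply: eq_bigr => i _; symmetry; rewrite addrC subrK.
have X0 : X (\sum_(i < n) g i) by apply/HX; exists g; split => // i; case: (hg i).
apply: (big_rec (fun s => X (\sum_(i < n) g i + s))); first by rewrite addr0.
move=> i s _ Hs; rewrite addrCA addrC.
by apply: hDX => //; case: (hg i).
Qed.

End Aux.

Theorem theorem2 (R : realType) (V : lmodType R) (C X : V -> Prop) :
  is_cone C -> decomp_antichain_convex C X ->
  (upward C X -> convex_set X) /\ (downward C X -> convex_set X).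
Proof.
move=> hC [n [Ss [HS HX]]].
have bnd : forall (P : V -> Prop),
   (forall x y l, P x -> P y -> 0 < l < 1 -> P (l *: x + (1 - l) *: y)) ->
   convex_set P.
  move=> P hP x y l Px Py /andP [l0 l1].
  have [->|ln0] := eqVneq l 0; first by rewrite scale0r add0r subr0 scale1r.
  have [->|ln1] := eqVneq l 1; first by rewrite scale1r subrr scale0r addr0.
  apply: hP => //; by rewrite lt_neqAle eq_sym ln0 l0 lt_neqAle ln1 l1.
split=> hup; apply: bnd.
- apply: (@core R V C X n Ss HS HX (fun d => d = 0 \/ C d)); first by left.
    move=> x d Xx [->|Cd]; first by rewrite addr0.
    by apply: (hup x) => //; rewrite addrAC subrr add0r.
  move=> a b l /andP [l0 l1] [hc|hc].
    exists a; split; first by left.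
    by right; rewrite idA; apply: hC => //; rewrite subr_gt0.
  exists b; split; first by right.
  by right; rewrite idB -opprB; apply: hC.
- apply: (@core R V C X n Ss HS HX (fun d => d = 0 \/ C (- d))); first by left.
    move=> x d Xx [->|Cd]; first by rewrite addr0.
    by apply: (hup x) => //; rewrite opprD addrA subrr add0r.
  move=> a b l /andP [l0 l1] [hc|hc].
    exists b; split; first by right.
    by right; rewrite idB -scalerN opprB; apply: hC.
  exists a; split; first by left.
  by right; rewrite idA -scalerN; apply: hC => //; rewrite subr_gt0.
Qed.
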